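(* Let $G$ be a finite non-abelian group. Then the non-centralizer graph $\Upsilon_G$ is regular if and only if $\beta_G(x)=xZ(G)$ for all $x\in G$.
   Context: For a finite group $G$ and $x\in G$, $C_G(x)=\{y\in G\mid xy=yx\}$ and $Z(G)$ is the center of $G$. The non-centralizer graph $\Upsilon_G$ is the simple graph with vertex set $G$ in which two distinct vertices $x,y$ are adjacent if and only if $C_G(x)\neq C_G(y)$. A graph is regular if all its vertices have the same degree. For $x\in G$, $\beta_G(x)=\{y\in G\mid C_G(y)=C_G(x)\}$. *)

(* Defs.v *)
From mathcomp Require Import all_boot all_fingroup all_solvable.
Set Implicit Arguments. Unset Strict Implicit. Unset Printing Implicit Defensive.
Local Open Scope group_scope.

Definition ncg_adj (gT : finGroupType) (G : {group gT}) (x y : gT) : bool :=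
  [&& x \in G, y \in G, x != y & 'C_G[x] != 'C_G[y]].

Definition ncg_deg (gT : finGroupType) (G : {group gT}) (x : gT) : nat :=
  #|[set y in G | ncg_adj G x y]|.

Definition ncg_regular (gT : finGroupType) (G : {group gT}) : Prop :=
  forall x y, x \in G -> y \in G -> ncg_deg G x = ncg_deg G y.

Definition beta (gT : finGroupType) (G : {group gT}) (x : gT) : {set gT} :=
  [set y in G | 'C_G[y] == 'C_G[x]].

(* Main.v *)
Require Import Defs.
From mathcomp Require Import all_boot all_fingroup all_solvable.
From mathcomp Require Import zify.
Local Open Scope group_scope.

Lemma beta_sub (gT : finGroupType) (G : {group gT}) x : beta G x \subset G.
Proof. by apply/subsetP => y; rewrite inE => /andP[]. Qed.

Lemma deg_eq (gT : finGroupType) (G : {group gT}) x :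
  x \in G -> ncg_deg G x = (#|G| - #|beta G x|)%N.
Proof.
move=> xG; rewrite /ncg_deg.
have -> : [set y in G | ncg_adj G x y] = G :\: beta G x.
  apply/setP => y; rewrite !inE /ncg_adj xG /=.
  case yG: (y \in G); rewrite ?andbF ?andbT //=.
  by case: (eqVneq x y) => [<-|_] /=; rewrite ?eqxx // eq_sym.
by rewrite cardsD (setIidPr (beta_sub _ G x)).
Qed.

Lemma coset_sub (gT : finGroupType) (G : {group gT}) x :
  x \in G -> x *: 'Z(G) \subset beta G x.
Proof.
move=> xG; apply/subsetP => y /lcosetP[z zZ ->].
move: zZ; rewrite inE => /andP[zG zC].
rewrite inE groupM //=; apply/eqP/setP => g; rewrite !in_setI.
case gG: (g \in G) => //=.
have gz : g * z = z * g by apply/esym/(centP zC).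
rewrite !cent1E.
apply/idP/idP => /eqP H; apply/eqP.
- apply: (mulIg z); rewrite -[LHS]mulgA H -[LHS]mulgA -gz [LHS]mulgA //.
- by rewrite [LHS]mulgA H -[LHS]mulgA gz [LHS]mulgA.
Qed.

Lemma beta1 (gT : finGroupType) (G : {group gT}) : beta G 1 = 'Z(G).
Proof.
apply/setP => y; rewrite /beta !inE cent11T setIT.
case yG: (y \in G) => //=.
rewrite eqEsubset subsetIl /= -sub_cent1.
apply/idP/idP => H.
- by apply: subset_trans H (subsetIr _ _).
- by apply/subsetP => g gG; rewrite inE gG (subsetP H).
Qed.

Lemma natl (g b z : nat) : (g - b = g - z -> b <= g -> z <= g -> z <= b -> b = z)%N.
Proof. lia. Qed.

Theorem proposition2p4 (gT : finGroupType) (G : {group gT}) :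
  ~~ abelian G ->
  (ncg_regular G <-> forall x, x \in G -> beta G x = x *: 'Z(G)).
Proof.
move=> _; split.
- move=> reg x xG.
  have := reg x 1 xG (group1 G).
  rewrite (deg_eq _ G x xG) (deg_eq _ G 1 (group1 G)) beta1 => E.
  have le1 := subset_leq_card (beta_sub _ G x).
  have le2 := subset_leq_card (beta_sub _ G 1); rewrite beta1 in le2.
  have := subset_leq_card (coset_sub _ G x xG); rewrite card_lcoset => le3.
  have Ec : #|beta G x| = #|'Z(G)| := (natl _ _ _ E le1 le2 le3).
  apply/esym/eqP; rewrite eqEcard coset_sub //= card_lcoset Ec leqnn //.
- move=> H x y xG yG.
  by rewrite (deg_eq _ G x xG) (deg_eq _ G y yG) H // H // !card_lcoset.
Qed.
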